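(* Let $q\ge2$, $n\ge2$, $X=\{0,\ldots,q-1\}$, and let $\mathcal{L}=\{L_1,\ldots,L_k\}$ be a partition of $X^n$ with respect to which the Insect Markov chain on $X^n$ is lumpable. For each $i$ let $L_i'\subseteq X^{n-1}$ be the set of words obtained by deleting the last letter from the elements of $L_i$. If $L_i'\cap L_j'\neq\emptyset$ for some indices $i,j$, then $L_i'=L_j'$.
   Context: For $x,y\in X^n$, $d(x,y)=n-\max\{m\in\{0,\ldots,n\}: x_1\cdots x_m=y_1\cdots y_m\}$. Set $\alpha_j=\frac{q^j-1}{q^{j+1}-1}$ for $1\le j\le n-1$ and $\alpha_n=0$. The Insect Markov chain on $X^n$ has transition probabilities: if $d(x,y)\in\{0,1\}$, $p(x,y)=q^{-1}(1-\alpha_1)+\sum_{i=2}^nq^{-i}\alpha_1\cdots\alpha_{i-1}(1-\alpha_i)$; if $d(x,y)=j>1$, $p(x,y)=\sum_{i=j}^nq^{-i}\alpha_1\cdots\alpha_{i-1}(1-\alpha_i)$. A chain is lumpable with respect to a partition if for all parts $L,L'$ the map $x\mapsto\sum_{y\in L'}p(x,y)$ is constant on $L$. *)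

(* Defs.v *)
From HB Require Import structures.
From mathcomp Require Import all_boot all_order all_algebra.
Set Implicit Arguments. Unset Strict Implicit. Unset Printing Implicit Defensive.
Import Order.TTheory GRing.Theory Num.Theory.

Notation word q n := {ffun 'I_n -> 'I_q}.

Definition lcp (q n : nat) (x y : word q n) : nat :=
  \max_(m < n.+1 | [forall i : 'I_n, (i < m) ==> (x i == y i)]) (m : nat).

Definition dist (q n : nat) (x y : word q n) : nat := n - lcp x y.

Local Open Scope ring_scope.

Definition alpha (R : realFieldType) (q n j : nat) : R :=
  if (j < n)%N then ((q%:R ^+ j - 1) / (q%:R ^+ j.+1 - 1)) else 0.

Definition term (R : realFieldType) (q n i : nat) : R :=
  (q%:R ^+ i)^-1 * (\prod_(1 <= l < i) alpha R q n l) * (1 - alpha R q n i).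

Definition insect_p (R : realFieldType) (q n : nat) (x y : word q n) : R :=
  let j := dist x y in
  if (j <= 1)%N then \sum_(1 <= i < n.+1) term R q n i
  else \sum_(j <= i < n.+1) term R q n i.

Definition lumpable (R : realFieldType) (q n : nat) (P : {set {set word q n}}) :=
  forall L L', L \in P -> L' \in P ->
    forall x y, x \in L -> y \in L ->
      \sum_(z in L') insect_p R x z = \sum_(z in L') insect_p R y z.

Definition trunc (q n : nat) (x : word q n) : word q n.-1 :=
  [ffun i : 'I_n.-1 => x (widen_ord (leq_pred n) i)].
Arguments lcp {q n} x y.
Arguments dist {q n} x y.
Arguments insect_p R {q n} x y.
Arguments lumpable R {q n} P.
Arguments trunc {q n} x.

(* Main.v *)
Require Import Defs.
From HB Require Import structures.
From mathcomp Require Import all_boot all_order all_algebra zify ring lra.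
Set Implicit Arguments. Unset Strict Implicit. Unset Printing Implicit Defensive.
Import Order.TTheory GRing.Theory Num.Theory.
Local Open Scope ring_scope.
Section Basic.
Variables (q n : nat).
Implicit Types (x y z : word q n).

Definition agree (m : nat) x z : bool := [forall k : 'I_n, (k < m)%N ==> (x k == z k)].

Lemma agreeP m x z : reflect (forall k : 'I_n, (k < m)%N -> x k = z k) (agree m x z).
Proof.
apply: (iffP forallP) => H k.
  by move=> km; apply/eqP; move: (H k); rewrite km.
by apply/implyP => km; apply/eqP; apply: H.
Qed.

Lemma agree_sym m x z : agree m x z = agree m z x.
Proof. by apply/agreeP/agreeP => H k km; rewrite H. Qed.

Lemma agree_trans m x y z : agree m x y -> agree m y z -> agree m x z.
Proof. by move=> /agreeP H1 /agreeP H2; apply/agreeP => k km; rewrite H1 // H2. Qed.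

Lemma agree_mono m m' x z : (m' <= m)%N -> agree m x z -> agree m' x z.
Proof. by move=> le /agreeP H; apply/agreeP => k km; apply: H; apply: leq_trans le. Qed.

Lemma lcp_le_n x z : (lcp x z <= n)%N.
Proof. by apply/bigmax_leqP => m _; rewrite -ltnS. Qed.

Lemma lcp_ge m x z : (m <= n)%N -> (m <= lcp x z)%N = agree m x z.
Proof.
move=> mn; apply/idP/idP.
  move=> ml; apply/agreeP => k km; apply/eqP; apply/negPn/negP => ne.
  have : (lcp x z <= k)%N.
    apply/bigmax_leqP => m' /forallP H; rewrite leqNgt; apply/negP => km'.
    by move: (H k); rewrite km' /= (negbTE ne).
  by move=> lk; have := leq_ltn_trans ml (leq_ltn_trans lk km); rewrite ltnn.
move=> /forallP H.
have -> : m = (Ordinal (mn : (m < n.+1)%N) : nat) by [].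
apply: (leq_bigmax_cond (F := fun m : 'I_n.+1 => (m : nat))).
by apply/forallP => k; exact: H k.
Qed.

Lemma dist_le i x z : (i <= n)%N -> (dist x z <= i)%N = agree (n - i) x z.
Proof.
move=> i_n; rewrite -lcp_ge ?leq_subr //; rewrite /dist.
have := lcp_le_n x z; lia.
Qed.

End Basic.
Section Terms.
Variables (R : realFieldType) (q n : nat).
Hypotheses (q2 : (2 <= q)%N) (n2 : (2 <= n)%N).
Implicit Types (x y z : word q n).

Lemma alpha_ge0 j : 0 <= alpha R q n j.
Proof.
rewrite /alpha; case: ifP => // _.
rewrite -!natrX; apply: divr_ge0; rewrite subr_ge0 ler1n expn_gt0; lia.
Qed.

Lemma alpha_lt1 j : alpha R q n j < 1.
Proof.
rewrite /alpha; case: ifP => // _.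
have h1 : (0 < q ^ j)%N by rewrite expn_gt0; lia.
have h2 : (q ^ j < q ^ j.+1)%N by rewrite ltn_exp2l; lia.
rewrite -!natrX ltr_pdivrMr ?mul1r ?ltrBlDr ?subrK ?ltr_nat //.
by rewrite subr_gt0 ltr1n; lia.
Qed.

Lemma term_ge0 i : 0 <= term R q n i.
Proof.
rewrite /term; apply: mulr_ge0; [apply: mulr_ge0|].
- by rewrite invr_ge0 exprn_ge0 // ler0n.
- by apply: prodr_ge0 => l _; apply: alpha_ge0.
- by rewrite subr_ge0 ltW // alpha_lt1.
Qed.

Lemma term1_gt0 : 0 < term R q n 1.
Proof.
rewrite /term big_geq // mulr1; apply: mulr_gt0.
- by rewrite invr_gt0 expr1 ltr0n; lia.
- by rewrite subr_gt0 alpha_lt1.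
Qed.

End Terms.
Section Decomp.
Variables (R : realFieldType) (q n : nat).
Implicit Types (x y z : word q n).
Lemma insect_decomp x z :
  insect_p R x z = \sum_(1 <= i < n.+1) term R q n i * (agree (n - i) x z)%:R.
Proof.
rewrite /insect_p.
have dn : (dist x z <= n)%N by rewrite /dist leq_subr.
have E i : (1 <= i < n.+1)%N -> agree (n - i) x z = (dist x z <= i)%N.
  by move=> /andP[_ h]; rewrite dist_le.
case: ifP => d1.
  rewrite big_nat_cond [RHS]big_nat_cond; apply: eq_bigr => i /andP[hi _].
  by rewrite E // (leq_trans d1) ?mulr1 //; case/andP: hi.
rewrite [RHS](big_cat_nat _ (m := 1) (n := dist x z)) //=; last by lia.
rewrite [X in _ = X + _]big_nat_cond [X in _ = X + _]big1 ?add0r; last first.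
  by move=> i /andP[/andP[h1 h2] _]; rewrite E; [rewrite leqNgt h2 mulr0|lia].
rewrite big_nat_cond [RHS]big_nat_cond; apply: eq_bigr => i /andP[/andP[h1 h2] _].
  by rewrite E ?h1 ?mulr1 //; lia.
by move: d1; case: (dist x z).
Qed.

Lemma insect_sym x z : insect_p R x z = insect_p R z x.
Proof. by rewrite !insect_decomp; apply: eq_bigr => i _; rewrite agree_sym. Qed.

End Decomp.
Lemma quad_sq (R : realFieldType) (T U : finType) (g : T -> U) (v : T -> R) :
  \sum_x \sum_z (g x == g z)%:R * (v x * v z) =
  \sum_c (\sum_(x | g x == c) v x) ^+ 2.
Proof.
transitivity (\sum_x v x * \sum_(z | g z == g x) v z).
  apply: eq_bigr => x _; rewrite [\sum_(z | g z == g x) _]big_mkcond mulr_sumr; apply: eq_bigr => z _ /=.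
  by rewrite eq_sym; case: eqP => _; rewrite ?mul1r ?mul0r ?mulr0.
rewrite (partition_big g xpredT) //=; apply: eq_bigr => c _.
rewrite expr2 mulr_suml; apply: eq_big => // x /eqP ->.
by [].
Qed.

Lemma quad_ge0 (R : realFieldType) (T U : finType) (g : T -> U) (v : T -> R) :
  0 <= \sum_x \sum_z (g x == g z)%:R * (v x * v z).
Proof. by rewrite quad_sq; apply: sumr_ge0 => c _; apply: sqr_ge0. Qed.

Lemma quad_eq0 (R : realFieldType) (T U : finType) (g : T -> U) (v : T -> R) :
  \sum_x \sum_z (g x == g z)%:R * (v x * v z) = 0 ->
  forall c, \sum_(x | g x == c) v x = 0.
Proof.
rewrite quad_sq => H c; apply/eqP; rewrite -sqrf_eq0; apply/eqP.
by apply: (psumr_eq0P _ H) => // c' _; apply: sqr_ge0.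
Qed.
Definition key (q n m : nat) (x : word q n) : {ffun 'I_n -> option 'I_q} :=
  [ffun k : 'I_n => if (k < m)%N then Some (x k) else None].

Lemma agree_key q n m (x z : word q n) : agree m x z = (key m x == key m z).
Proof.
apply/agreeP/eqP => H.
  by apply/ffunP => k; rewrite !ffunE; case: ifP => // km; rewrite H.
by move=> k km; move/ffunP: H => /(_ k); rewrite !ffunE km => -[].
Qed.

Definition Pop (R : realFieldType) q n (v : word q n -> R) (x : word q n) :=
  \sum_z insect_p R x z * v z.

Lemma Pop_quad (R : realFieldType) q n (v : word q n -> R) :
  \sum_x v x * Pop v x =
  \sum_(1 <= i < n.+1) term R q n i *
     \sum_x \sum_z (key (n - i) x == key (n - i) z)%:R * (v x * v z).
Proof.
transitivity (\sum_x \sum_z \sum_(1 <= i < n.+1)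
   term R q n i * ((key (n - i) x == key (n - i) z)%:R * (v x * v z))).
  apply: eq_bigr => x _; rewrite /Pop mulr_sumr; apply: eq_bigr => z _.
  rewrite insect_decomp mulr_suml mulr_sumr; apply: eq_bigr => i _.
  by rewrite agree_key mulrCA !mulrA.
under eq_bigr => x _ do rewrite exchange_big.
rewrite exchange_big /=.
by apply: eq_bigr => i _; rewrite mulr_sumr; apply: eq_bigr => x _; rewrite mulr_sumr.
Qed.
Lemma Pop0_E (R : realFieldType) q n (v : word q n -> R) :
  (2 <= q)%N -> (2 <= n)%N -> (forall x, Pop v x = 0) ->
  forall x, \sum_(z | agree (n - 1) x z) v z = 0.
Proof.
move=> q2 n2 H0 x.
have : \sum_x v x * Pop v x = 0 by apply: big1 => y _; rewrite H0 mulr0.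
rewrite Pop_quad big_ltn ?ltnS; last by lia.
move=> /eqP.
rewrite paddr_eq0; last 2 first.
- by apply: mulr_ge0; [exact: (term_ge0 R q2 n2) | apply: quad_ge0].
- apply: sumr_ge0 => i _; apply: mulr_ge0; [exact: (term_ge0 R q2 n2) | apply: quad_ge0].
case/andP; rewrite mulf_eq0 (gt_eqF (term1_gt0 R q2 n2)) /= => /eqP /quad_eq0 /(_ (key (n - 1) x)) H _.
rewrite (eq_bigl (fun z => key (n - 1) z == key (n - 1) x)); first exact: H.
by move=> z; rewrite agree_key eq_sym.
Qed.
Lemma p_agree (R : realFieldType) q n (x z z' : word q n) :
  agree (n - 1) z z' -> insect_p R x z = insect_p R x z'.
Proof.
move=> a; rewrite !insect_decomp big_nat_cond [RHS]big_nat_cond.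
apply: eq_bigr => i /andP[/andP[i1 _] _].
have a' : agree (n - i) z z' by apply: agree_mono a; lia.
suff -> : agree (n - i) x z = agree (n - i) x z' by [].
apply/idP/idP => h; first exact: agree_trans h a'.
by apply: agree_trans h _; rewrite agree_sym.
Qed.

Lemma card_fiber q n (z' : word q n) : (1 <= n)%N ->
  #|[set z : word q n | agree (n - 1) z z']| = q.
Proof.
move=> n1; have k0n : (n.-1 < n)%N by lia.
pose k0 : 'I_n := Ordinal k0n.
pose ext (a : 'I_q) : word q n := [ffun k : 'I_n => if (k < n - 1)%N then z' k else a].
have inj : injective ext.
  move=> a b /ffunP /(_ k0); rewrite !ffunE /=.
  by have -> : (n.-1 < n - 1)%N = false by lia.
have -> : [set z : word q n | agree (n - 1) z z'] = [set ext a | a in 'I_q].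
  apply/setP => z; rewrite inE; apply/idP/imsetP.
    move=> /agreeP az; exists (z k0) => //; apply/ffunP => k; rewrite ffunE.
    case: ifP => hk; first by rewrite az.
    by congr (z _); apply: val_inj => /=; move: (ltn_ord k) hk => /=; lia.
  by case=> a _ ->; apply/agreeP => k hk; rewrite ffunE hk.
by rewrite card_imset // card_ord.
Qed.
Section Part.
Variables (R : realFieldType) (q n : nat) (P : {set {set word q n}}).
Hypothesis (hP : partition P [set: word q n]) (hL : lumpable R P).
Local Notation T := (word q n).

Definition inW (f : T -> R) :=
  forall L, L \in P -> forall x y, x \in L -> y \in L -> f x = f y.
Definition perp (u : T -> R) := forall L, L \in P -> \sum_(x in L) u x = 0.

Lemma triv : trivIset P. Proof. by case/and3P: hP. Qed.
Lemma covT : cover P = [set: T]. Proof. by case/and3P: hP => /eqP. Qed.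

Lemma sum_part (F : T -> R) : \sum_x F x = \sum_(L in P) \sum_(x in L) F x.
Proof.
rewrite -(big_trivIset _ triv) covT.
by apply: eq_bigl => x; rewrite in_setT.
Qed.

Lemma orthW f u : inW f -> perp u -> \sum_x f x * u x = 0.
Proof.
move=> hf hu; rewrite sum_part; apply: big1 => L LP.
case: (set_0Vmem L) => [-> | [x0 x0L]]; first by rewrite big_set0.
rewrite (eq_bigr (fun x => f x0 * u x)); first by rewrite -mulr_sumr hu ?mulr0.
by move=> x xL; rewrite (hf L LP x x0).
Qed.

Lemma W_perp0 u : inW u -> perp u -> forall x, u x = 0.
Proof.
move=> h1 h2 x; have := orthW h1 h2.
move/eqP; rewrite psumr_eq0; last by move=> y _; rewrite -expr2 sqr_ge0.
move/allP => /(_ x (mem_index_enum x)) /=.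
by rewrite mulf_eq0 orbb => /eqP.
Qed.

Lemma Pop_W f : inW f -> inW (Pop f).
Proof.
move=> hf L LP x y xL yL; rewrite /Pop !sum_part; apply: eq_bigr => L' L'P.
case: (set_0Vmem L') => [-> | [z0 z0L]]; first by rewrite !big_set0.
rewrite (eq_bigr (fun z => insect_p R x z * f z0)); last first.
  by move=> z zL; rewrite (hf L' L'P z z0).
rewrite [RHS](eq_bigr (fun z => insect_p R y z * f z0)); last first.
  by move=> z zL; rewrite (hf L' L'P z z0).
by rewrite -!mulr_suml (hL LP L'P xL yL).
Qed.

Lemma Pop_perp u : perp u -> perp (Pop u).
Proof.
move=> hu L LP; rewrite /Pop exchange_big /=.
under eq_bigr => z _ do rewrite -mulr_suml.
rewrite (eq_bigr (fun z => (\sum_(i in L) insect_p R z i) * u z)); last first.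
  by move=> z _; congr (_ * _); apply: eq_bigr => i _; rewrite insect_sym.
apply: (orthW (f := fun z => \sum_(i in L) insect_p R z i)) hu => L1 L1P x y xL yL.
exact: (hL L1P LP xL yL).
Qed.

Hypotheses (q2 : (2 <= q)%N) (n2 : (2 <= n)%N).

Definition hfun (L' : {set T}) (x : T) : R :=
  \sum_(z | agree (n - 1) x z) (z \in L')%:R.
Definition piW (f : T -> R) (x : T) : R :=
  (\sum_(y in pblock P x) f y) / #|pblock P x|%:R.

Lemma piW_W f : inW (piW f).
Proof.
move=> L LP x y xL yL; rewrite /piW.
by rewrite (def_pblock triv LP xL) (def_pblock triv LP yL).
Qed.

Lemma piW_perp f : perp (fun x => f x - piW f x).
Proof.
move=> L LP; rewrite sumrB.
case: (set_0Vmem L) => [-> | [x0 x0L]]; first by rewrite !big_set0 subr0.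
rewrite [X in _ - X](eq_bigr (fun _ => (\sum_(y in L) f y) / #|L|%:R)); last first.
  by move=> x xL; rewrite /piW (def_pblock triv LP xL).
rewrite sumr_const -[_ *+ #|L|]mulr_natr divfK ?subrr //.
by rewrite pnatr_eq0 -lt0n; apply/card_gt0P; exists x0.
Qed.

Lemma Pop_h L' : L' \in P -> inW (Pop (hfun L')).
Proof.
move=> L'P.
have E x : Pop (hfun L') x = q%:R * \sum_(z in L') insect_p R x z.
  rewrite /Pop /hfun.
  under eq_bigr => z _ do rewrite big_mkcond mulr_sumr.
  rewrite exchange_big /= [RHS]mulr_sumr [RHS]big_mkcond /=.
  apply: eq_bigr => z' _.
  rewrite (eq_bigr (fun z => if agree (n - 1) z z'
        then insect_p R x z' * (z' \in L')%:R else 0)); last first.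
    move=> z _; case: ifP => a; last by rewrite mulr0.
    by rewrite (p_agree R x a).
  rewrite -big_mkcond /= (eq_bigl (mem [set z | agree (n - 1) z z'])); last first.
    by move=> z; rewrite !inE.
  rewrite sumr_const card_fiber; last by lia.
  by case: (z' \in L'); rewrite ?mulr1 ?mulr0 ?mul0rn ?mulr0 // mulr_natl.
move=> L LP x y xL yL; rewrite !E; congr (_ * _); exact: (hL LP L'P xL yL).
Qed.

Lemma hfun_W L' : L' \in P -> inW (hfun L').
Proof.
move=> L'P.
pose h := hfun L'; pose u := fun x => h x - piW h x.
have up : perp u by exact: piW_perp.
have PuW : inW (Pop u).
  have E x : Pop u x = Pop h x - Pop (piW h) x.
    by rewrite /Pop -sumrB; apply: eq_bigr => z _; rewrite mulrBr.
  move=> L LP x y xL yL; rewrite !E.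
  by rewrite (Pop_h L'P LP xL yL) (Pop_W (@piW_W h) LP xL yL).
have Pu0 := W_perp0 PuW (Pop_perp up).
have Eu0 := Pop0_E q2 n2 Pu0.
have uu : \sum_x u x * u x = 0.
  have -> : \sum_x u x * u x = \sum_x u x * h x - \sum_x piW h x * u x.
    by rewrite -sumrB; apply: eq_bigr => x _; rewrite /u mulrBr [piW h x * _]mulrC.
  rewrite (orthW (@piW_W h) up) subr0 /h /hfun.
  under eq_bigr => x _ do rewrite big_mkcond mulr_sumr.
  rewrite exchange_big /=; apply: big1 => z _.
  rewrite (eq_bigr (fun x => (z \in L')%:R * (if agree (n - 1) z x then u x else 0))).
    by rewrite -mulr_sumr -big_mkcond /= Eu0 mulr0.
  by move=> x _; rewrite agree_sym; case: ifP; rewrite ?mulr0 ?mul0r // mulrC.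
have u0 x : u x = 0.
  move/eqP: uu; rewrite psumr_eq0; last by move=> y _; rewrite -expr2 sqr_ge0.
  move/allP => /(_ x (mem_index_enum x)) /=.
  by rewrite mulf_eq0 orbb => /eqP.
move=> L LP x y xL yL.
have hx : h x = piW h x by apply/eqP; rewrite -subr_eq0; apply/eqP; exact: u0.
have hy : h y = piW h y by apply/eqP; rewrite -subr_eq0; apply/eqP; exact: u0.
by rewrite -/h hx hy (@piW_W h L LP x y xL yL).
Qed.

End Part.
Lemma trunc_agree q n (x z : word q n) : trunc x = trunc z -> agree (n - 1) x z.
Proof.
move=> /ffunP H; apply/agreeP => k hk.
have hk' : (k < n.-1)%N by rewrite -subn1.
move: (H (Ordinal hk')); rewrite !ffunE.
by have -> : widen_ord (leq_pred n) (Ordinal hk') = k by apply: val_inj.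
Qed.

Lemma agree_trunc q n (x z : word q n) : agree (n - 1) x z -> trunc x = trunc z.
Proof.
move=> /agreeP H; apply/ffunP => i; rewrite !ffunE; apply: H => /=.
by rewrite subn1.
Qed.

Lemma sub_trunc (R : realFieldType) (q n : nat) (P : {set {set word q n}}) :
  (2 <= q)%N -> (2 <= n)%N ->
  partition P [set: word q n] ->
  lumpable R P ->
  forall Li Lj, Li \in P -> Lj \in P ->
    (trunc @: Li) :&: (trunc @: Lj) != set0 ->
    trunc @: Lj \subset trunc @: Li.
Proof.
move=> q2 n2 hP hL Li Lj LiP LjP /set0Pn [w].
rewrite inE => /andP[/imsetP[x0 x0L ->] /imsetP[y0 y0L e]].
have hW := hfun_W hP hL q2 n2 LiP.
have hy0 : 0 < hfun R Li y0.
  rewrite /hfun (bigD1 x0) /=; last by apply: trunc_agree.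
  rewrite x0L; apply: (lt_le_trans (ltr01 : (0 : R) < 1)).
  by rewrite lerDl; apply: sumr_ge0 => z _; rewrite ler0n.
apply/subsetP => w' /imsetP[v vL ->].
have : hfun R Li v != 0 by rewrite -(hW Lj LjP y0 v y0L vL) gt_eqF.
apply: contraNT => nv; apply/eqP; apply: big1 => z az.
case: (boolP (z \in Li)) => // zL.
by move: nv; rewrite (agree_trunc az) (imset_f _ zL).
Qed.

Theorem lemma13 (R : realFieldType) (q n : nat) (P : {set {set word q n}}) :
  (2 <= q)%N -> (2 <= n)%N ->
  partition P [set: word q n] ->
  lumpable R P ->
  forall Li Lj, Li \in P -> Lj \in P ->
    (trunc @: Li) :&: (trunc @: Lj) != set0 ->
    trunc @: Li = trunc @: Lj.
Proof.
move=> q2 n2 hP hL Li Lj LiP LjP ne.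
apply/eqP; rewrite eqEsubset; apply/andP; split.
  by apply: (sub_trunc q2 n2 hP hL LjP LiP); rewrite setIC.
exact: (sub_trunc q2 n2 hP hL LiP LjP).
Qed.
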